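(* Let $p,r$ be primes and let $A$ be a noncyclic abelian $r$-group acting by automorphisms on a finite group $H$ such that the action is good. Assume that $H=VG$ where $V$ and $G$ are both $A$-invariant subgroups, $V$ is a normal $p$-subgroup of $H$ with $C_G(V)=1$, and $C_V(a)\leq C_V(g)$ for each nonidentity $a\in A$ and each $p'$-element $g\in C_G(a)$. Then either $p=r$ or $G$ is an $r'$-group.
   Context: If a group $A$ acts on a group $G$ by automorphisms, the action is called good if $H=[H,B]C_H(B)$ for every subgroup $B\le A$ and every $B$-invariant subgroup $H\le G$. *)

(* Defs.v *)
From mathcomp Require Import all_boot all_fingroup all_solvable.
Set Implicit Arguments. Unset Strict Implicit. Unset Printing Implicit Defensive.
Local Open Scope group_scope.

(* The action of A on H is modelled internally: A and H are subgroups of an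
   ambient finite group gT with A normalizing H, and A acts by conjugation.
   [~: K, B] is the subgroup generated by the k^-1 k^b, and 'C_K(B) is the
   fixed-point subgroup of B in K. *)
Definition good_action (gT : finGroupType) (A H : {set gT}) : Prop :=
  forall B K : {group gT}, B \subset A -> K \subset H -> B \subset 'N(K) ->
    (K :=: [~: K, B] * 'C_K(B)).

(* Main.v *)
From mathcomp Require Import all_boot all_fingroup all_solvable ssralg.
Require Import Defs.
From mathcomp Require Import zify.
Set Implicit Arguments. Unset Strict Implicit. Unset Printing Implicit Defensive.
Import GRing.Theory FiniteModule.
Local Open Scope group_scope.

Lemma norm_fixed (gT : finGroupType) (Q : {group gT}) (abQ : abelian Q)
   (e : gT) (n : nat) (u : fmod_of abQ) :
  e \in 'N(Q) -> e ^+ n.+1 = 1 ->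
  actr (\sum_(0 <= i < n.+1) actr u (e ^+ i))%R e = (\sum_(0 <= i < n.+1) actr u (e ^+ i))%R.
Proof.
move=> nQe en.
rewrite actr_sum.
have -> : (\sum_(0 <= i < n.+1) actr (actr u (e ^+ i)) e = \sum_(0 <= i < n.+1) actr u (e ^+ i.+1))%R.
  apply: eq_bigr => i _; rewrite -actrM ?groupX // -expgSr //.
by rewrite big_nat_recr //= en actr1 (big_nat_recl n) //= expg0 actr1 addrC.
Qed.

Lemma norm_zero (gT : finGroupType) (Q : {group gT}) (abQ : abelian Q)
   (e : gT) (n : nat) (u : fmod_of abQ) :
  e \in 'N(Q) -> e ^+ n.+1 = 1 -> 'C_Q[e] = 1 ->
  (\sum_(0 <= i < n.+1) actr u (e ^+ i))%R = 0%R.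
Proof.
move=> nQe en C1; set s := (\sum_(0 <= i < n.+1) _)%R.
have fx := norm_fixed u nQe en; rewrite -/s in fx.
apply: fmod_inj; rewrite /= fmval0.
have : val s \in 'C_Q[e].
  rewrite inE fmodP /=; apply/cent1P; rewrite /commute {1}conjgC.
  by rewrite -fmvalJ // fx.
by rewrite C1 inE => /eqP.
Qed.

Lemma fpf_trivial (gT : finGroupType) (Q E : {group gT}) (r : nat) :
  prime r -> abelian Q -> E \subset 'N(Q) -> r.-abelem E -> logn r #|E| = 2 ->
  coprime #|Q| #|E| -> (forall e, e \in E -> e != 1 -> 'C_Q[e] = 1) -> Q :=: 1.
Proof.
move=> pr abQ nQE abelE logE coQE fpf.
have r1: r = r.-1.+1 by rewrite prednK // prime_gt0.
have abE := abelem_abelian abelE.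
have expE e : e \in E -> e ^+ r = 1.
  move=> Ee; have [->|ne] := eqVneq e 1; first by rewrite expg1n.
  by rewrite -(abelem_order_p abelE Ee ne) expg_order.
have cardE : #|E| = (r ^ 2)%N by rewrite (card_pgroup (abelem_pgroup abelE)) logE.
have coQ : coprime #|Q| r by move: coQE; rewrite cardE coprime_pexpr.
have [c Ec nc] : exists2 c, c \in E & c != 1.
  apply/trivgPn; apply/negP => /eqP E1; move: cardE; rewrite E1 cards1 => h.
  have := prime_gt1 pr; nia.
have oc := abelem_order_p abelE Ec nc.
have [b Eb nbc] : exists2 b, b \in E & b \notin <[c]>.
  have : <[c]> \proper E.
    by rewrite properEcard cycle_subG Ec -orderE oc cardE -{1}(expn1 r) ltn_exp2l // prime_gt1.
  by case/properP => _ [b Eb nb]; exists b.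
have cE : {in E &, forall x y, commute x y}.
  by move=> x y Ex Ey; apply: (centsP abE).
have nE : forall e, e \in E -> e \in 'N(Q) := subsetP nQE.
apply/trivgP; apply/subsetP => x Qx; rewrite inE.
pose u := fmod abQ x.
have key : (u *+ r = 0)%R.
  have H0 : (\sum_(0 <= j < r) \sum_(0 <= i < r) actr u ((b * c ^+ j) ^+ i) = 0)%R.
    apply: big1 => j _; rewrite r1; apply: norm_zero.
    - by rewrite nE // groupM ?groupX.
    - by rewrite -r1 expE // groupM ?groupX.
    - apply: fpf; first by rewrite groupM ?groupX.
      apply: contra nbc => /eqP bc1.
      by rewrite (canRL (mulgK _) bc1) mul1g groupV mem_cycle.
  rewrite (eq_bigr (fun j => \sum_(0 <= i < r) actr (actr u (b ^+ i)) ((c ^+ i) ^+ j))%R) in H0; last first.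
    move=> j _; apply: eq_bigr => i _.
    rewrite expgMn; last by apply: cE; rewrite ?groupX.
    by rewrite -expgM mulnC expgM actrM // ?nE ?groupX.
  rewrite exchange_big /= big_ltn ?prime_gt0 // in H0.
  have Hrest : (\sum_(1 <= i < r) \sum_(0 <= j < r) actr (actr u (b ^+ i)) ((c ^+ i) ^+ j) = 0)%R.
    rewrite big_nat_cond big1 // => i /andP[/andP[i1 ir] _]; rewrite r1; apply: norm_zero.
    - by rewrite nE // groupX.
    - by rewrite -r1 -expgM mulnC expgM expE ?expg1n.
    - apply: fpf; first by rewrite groupX.
      apply/eqP => ci1.
      have : (#[c] %| i)%N by rewrite order_dvdn ci1.
      by rewrite oc => /(dvdn_leq i1); rewrite leqNgt ir.
  rewrite Hrest addr0 in H0.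
  rewrite -H0 (eq_bigr (fun=> u)) ?sumr_const_nat ?subn0 // => j _.
  by rewrite !expg0 expg1n !actr1.
have : val (u *+ r)%R = val (0%R : fmod_of abQ) by rewrite key.
rewrite fmvalZ fmval0 fmodK // => /eqP xr1.
have : (#[x] %| gcdn #|Q| r)%N by rewrite dvdn_gcd order_dvdG // order_dvdn xr1.
by rewrite (eqP coQ) dvdn1 order_eq1.
Qed.

Lemma cent_comm_decomp (gT : finGroupType) (V : {group gT}) (a : gT) :
  a \in 'N(V) -> coprime #|V| #[a] -> solvable V ->
  V \subset [~: V, <[a]>] * 'C_V(<[a]>).
Proof.
move=> nVa co solV; set X := [~: V, <[a]>].
have nVA : <[a]> \subset 'N(V) by rewrite cycle_subG.
have sXV : X \subset V by rewrite commg_subl.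
have nXV : V \subset 'N(X) := commg_norml V <[a]>.
have nXA : <[a]> \subset 'N(X) := commg_normr _ _.
have co' : coprime #|X| #|<[a]>| by rewrite -orderE (coprimeSg sXV).
have eq := coprime_norm_quotient_cent nVA nXA co' (solvableS sXV solV).
have : V / X \subset 'C_(V / X)(<[a]> / X) by rewrite subsetI subxx quotient_cents2r.
by rewrite -eq quotientSK.
Qed.

Lemma key_gen (n : nat) (gT : finGroupType) (A V : {group gT}) (r : nat) :
  #|V| <= n -> prime r -> r.-group A -> abelian A -> ~~ cyclic A ->
  solvable V -> A \subset 'N(V) -> coprime #|V| #|A| ->
  V \subset <<\bigcup_(a in A^#) 'C_V[a]>>.
Proof.
move=> + pr rA abA ncA; elim: n V => [|n IH] V leV solV nVA coVA.
  by move: leV; rewrite leqNgt cardG_gt0.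
set W := <<_>>.
case: (boolP [exists a in A^#, [~: V, <[a]>] \proper V]) => [/exists_inP[a Aa ltXV] | /exists_inPn allV].
  have Aa' : a \in A by case/setD1P: Aa.
  have nVa : a \in 'N(V) := subsetP nVA a Aa'.
  have coa : coprime #|V| #[a] by rewrite orderE (coprimegS _ coVA) // cycle_subG.
  have sVd := cent_comm_decomp nVa coa solV.
  set X := [~: V, <[a]>] in ltXV sVd *.
  have sXV := proper_sub ltXV.
  have nXA : A \subset 'N(X).
    by rewrite normsR // cents_norm // sub_abelian_cent // cycle_subG.
  have sXW : X \subset W.
    have leX : #|X| <= n.
      by rewrite -ltnS; apply: leq_trans (proper_card ltXV) leV.
    apply: subset_trans (IH X leX (solvableS sXV solV) nXA (coprimeSg sXV coVA)) _.
    apply: genS; apply/bigcupsP => b Ab; apply: subset_trans (bigcup_sup b Ab).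
    exact: setSI.
  have sCW : 'C_V(<[a]>) \subset W.
    by rewrite cent_cycle; apply: sub_gen; exact: (bigcup_sup a Aa).
  by apply: subset_trans sVd _; rewrite mul_subG.
have eqV : forall a, a \in A^# -> [~: V, <[a]>] = V.
  move=> a Aa; have Aa' : a \in A by case/setD1P: Aa.
  have nVa : a \in 'N(V) := subsetP nVA a Aa'.
  apply/eqP; rewrite eqEsubset commg_subl cycle_subG nVa /=.
  by have := allV a Aa; rewrite properE commg_subl cycle_subG nVa /= negbK.
have [V1 | ntV] := eqVneq V 1%G; first by rewrite V1 sub1G.
exfalso.
have ntV' : (V :!=: 1).
  by apply: contra ntV => /eqP V1; apply/eqP; apply: val_inj.
set N := V^`(1).
have ltNV : N \proper V := sol_der1_proper solV (subxx V) ntV'.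
have sNV := proper_sub ltNV.
have nNA : A \subset 'N(N) := char_norm_trans (der_char 1 V) nVA.
have nNV : V \subset 'N(N) := normal_norm (der_normal 1 V).
have tiNA : N :&: A = 1 := coprime_TIg (coprimeSg sNV coVA).
have isoA := quotient_isog nNA tiNA.
have ncAN : ~~ cyclic (A / N) by rewrite -(isog_cyclic isoA).
have rAN : r.-group (A / N) := quotient_pgroup _ rA.
have : 1 < 'r(A / N).
  by move: ncAN; rewrite abelian_rank1_cyclic ?quotient_abelian // ltnNge.
rewrite (rank_pgroup rAN) => /p_rank_geP[E /pnElemP[sEA abelE logE]].
have abQ : abelian (V / N) := sub_der1_abelian (subxx _).
have nQE : E \subset 'N(V / N) := subset_trans sEA (quotient_norms _ nVA).
have coQE : coprime #|V / N| #|E|.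
  exact: coprimegS sEA (coprime_morph _ coVA).
have Q1 := fpf_trivial pr abQ nQE abelE logE coQE.
suff sVN : V \subset N by move: ltNV; rewrite properE sVN andbF.
rewrite -(quotient_sub1 nNV) Q1 // => e Ee ne.
  move: ne; have := subsetP sEA e Ee; case/morphimP => a Na Aa -> ne.
  have Aa1 : a \in A^#.
    rewrite !inE Aa andbT; apply: contra ne => /eqP ->; by rewrite morph1.
  have nVa : a \in 'N(V) := subsetP nVA a Aa.
  rewrite -cent_cycle -quotient_cycle //.
  have nNa : <[a]> \subset 'N(N) by rewrite cycle_subG.
  have nVa' : <[a]> \subset 'N(V) by rewrite cycle_subG.
  have coVa : coprime #|V| #|<[a]>| by rewrite (coprimegS _ coVA) // cycle_subG.
  have TI := coprime_abel_cent_TI (quotient_norms N nVa') (coprime_morph _ coVa) abQ.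
  by rewrite -quotientR // eqV in TI.
Qed.

Unset Implicit Arguments.
Theorem lemma4p1 (gT : finGroupType) (p r : nat) (A H V G : {group gT}) :
  prime p -> prime r ->
  abelian A -> r.-group A -> ~~ cyclic A ->
  A \subset 'N(H) -> good_action A H ->
  H :=: V * G -> A \subset 'N(V) -> A \subset 'N(G) ->
  V <| H -> p.-group V -> 'C_G(V) = 1 ->
  (forall a g, a \in A^# -> g \in 'C_G[a] -> p^'.-elt g ->
     'C_V[a] \subset 'C_V[g]) ->
  p = r \/ r^'.-group G.
Proof.
move=> pp pr abA rA ncA nHA good defH nVA nGA nsVH pV cGV1 hyp.
case: (eqVneq p r) => [-> | npr]; [by left | right].
have sGH : G \subset H by rewrite defH mulG_subr.
have [P sylP sAP] := Sylow_superset (joing_subr G A) rA.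
have nsG : G <| G <*> A by rewrite normalYl.
pose R := (G :&: P)%G.
have sylR : r.-Sylow(G) R := Sylow_setI_normal nsG sylP.
have rR : r.-group R := pHall_pgroup sylR.
have sRG : R \subset G := subsetIl _ _.
have sRP : R \subset P := subsetIr _ _.
have rP : r.-group P := pHall_pgroup sylP.
have nRA : A \subset 'N(R) by rewrite normsI // (subset_trans sAP (normG P)).
have sRH : R \subset H := subset_trans sRG sGH.
have defR := good A R (subxx A) sRH nRA.
have XA : [~: R, A] = [~: [~: R, A], A].
  rewrite {1}defR commMG; last first.
    apply: normsR; last exact: cents_norm (subsetIr _ _).
    exact: subset_trans (subsetIl _ _) (commg_norml R A).
  by have /commG1P -> : 'C_R(A) \subset 'C(A) := subsetIr _ _; rewrite mulg1.
have X1 : [~: R, A] = 1.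
  apply/eqP; apply: contraT => ntX.
  have sXP : [~: R, A] \subset P by apply: subset_trans sRP; rewrite commg_subl.
  have nXA : A \subset 'N_P([~: R, A]) by rewrite subsetI sAP commg_normr.
  by have := nil_comm_properl (pgroup_nil rP) sXP ntX nXA; rewrite -XA properxx.
have cRA : R \subset 'C(A) by apply/commG1P.
have coVA : coprime #|V| #|A|.
  apply: (pnat_coprime pV); apply: sub_pgroup rA => q; rewrite !inE => /eqP ->.
  by rewrite eq_sym.
have sVW := key_gen (leqnn #|V|) pr rA abA ncA (pgroup_sol pV) nVA coVA.
suff R1 : R :=: 1.
  by rewrite -partG_eq1 -(card_Hall sylR) R1 cards1.
apply/trivgP; apply/subsetP => g Rg; rewrite -cGV1 inE (subsetP sRG g Rg) /=.
rewrite -sub_cent1; apply: subset_trans sVW _; rewrite gen_subG.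
apply/bigcupsP => a Aa; have Aa' : a \in A by case/setD1P: Aa.
apply: subset_trans (subsetIr V _); apply: hyp => //.
  rewrite inE (subsetP sRG g Rg); apply/cent1P.
  exact: (centsP cRA) g Rg a Aa'.
by apply: pi_pnat (mem_p_elt rR Rg) _; rewrite !inE eq_sym.
Qed.
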